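(* Let $\Bbbk$ be an algebraically closed field and $A$ any finite dimensional $\Bbbk$-algebra. Then $\operatorname{HHdim} T(T(A))=\infty$.
   Context: For a finite dimensional algebra $B$, $T(B)=B\ltimes DB$ is the trivial extension: the vector space $B\oplus DB$, where $DB=\operatorname{Hom}_\Bbbk(B,\Bbbk)$ with its natural bimodule structure, with multiplication $(a,f)(b,g)=(ab,ag+fb)$. $\operatorname{HH}_n(B)=\operatorname{Tor}^{B\otimes_\Bbbk B^{\mathrm{op}}}_n(B,B)$ is the $n$-th Hochschild homology group, and $\operatorname{HHdim}B=\sup\{n\mid \operatorname{HH}_n(B)\neq 0\}$. *)

(* Defs.v *)
(* Finite-dimensional algebras are given by structure
   constants w.r.t. a basis; Hochschild homology is computed by the
   (unnormalized) Hochschild complex B^{(x)(n+1)} with the standard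
   boundary, which computes Tor^{B^e}_n(B,B) over a field. *)
From HB Require Import structures.
From mathcomp Require Import all_boot all_order all_algebra.
Set Implicit Arguments. Unset Strict Implicit. Unset Printing Implicit Defensive.
Import Order.TTheory GRing.Theory Num.Theory.
Local Open Scope ring_scope.

(* A finite dimensional k-algebra with basis e_0..e_{d-1}:
   e_i * e_j = \sum_l fd_mul i j l e_l, and 1 = \sum_l fd_one l e_l. *)
Record fdalg (k : fieldType) := FDAlg {
  fd_dim : nat;
  fd_mul : 'I_fd_dim -> 'I_fd_dim -> 'I_fd_dim -> k;
  fd_one : 'I_fd_dim -> k }.

Definition fdalg_axioms (k : fieldType) (B : fdalg k) : Prop :=
  [/\ (0 < fd_dim B)%N,
      (forall i j m p : 'I_(fd_dim B),
         \sum_(l < fd_dim B) fd_mul i j l * fd_mul l m p =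
         \sum_(l < fd_dim B) fd_mul j m l * fd_mul i l p),
      (forall j p : 'I_(fd_dim B),
         \sum_(l < fd_dim B) fd_one l * fd_mul l j p = (j == p)%:R) &
      (forall j p : 'I_(fd_dim B),
         \sum_(l < fd_dim B) fd_one l * fd_mul j l p = (j == p)%:R)].

(* Trivial extension T(B) = B \ltimes DB, basis e_0..e_{d-1} (from B)
   followed by the dual basis e_0^*..e_{d-1}^* (from DB).
   e_i e_j = \sum c_{ijl} e_l;  e_i e_j^* = \sum_l c_{lij} e_l^*
   (since (e_i f)(x) = f(x e_i));  e_j^* e_i = \sum_l c_{ilj} e_l^*
   (since (f e_i)(x) = f(e_i x));  e_i^* e_j^* = 0. *)
Definition triv_ext_mul (k : fieldType) (B : fdalg k)
  (x y z : 'I_(fd_dim B + fd_dim B)) : k :=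
  match split x, split y, split z with
  | inl i, inl j, inl l => fd_mul i j l
  | inl i, inr j, inr l => fd_mul l i j
  | inr j, inl i, inr l => fd_mul i l j
  | _, _, _ => 0
  end.

Definition triv_ext_one (k : fieldType) (B : fdalg k)
  (x : 'I_(fd_dim B + fd_dim B)) : k :=
  match split x with inl i => fd_one i | inr _ => 0 end.

Definition triv_ext (k : fieldType) (B : fdalg k) : fdalg k :=
  @FDAlg k (fd_dim B + fd_dim B) (@triv_ext_mul k B) (@triv_ext_one k B).

(* Hochschild chains in degree n: B^{(x)(n+1)}, coordinates on the basis
   e_{s 0} (x) ... (x) e_{s n}. *)
Definition hchains (k : fieldType) (B : fdalg k) (n : nat) : Type :=
  {ffun 'I_n.+1 -> 'I_(fd_dim B)} -> k.

(* Coefficient of e_t in the inner face d_i (i = 0..n) applied to e_s,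
   where s has n+2 factors and t has n+1:
   d_i(a_0 (x) .. (x) a_{n+1}) = a_0 (x) .. (x) a_i a_{i+1} (x) .. (x) a_{n+1}. *)
Definition inner_face (k : fieldType) (B : fdalg k) (n : nat) (i : 'I_n.+1)
  (s : {ffun 'I_n.+2 -> 'I_(fd_dim B)}) (t : {ffun 'I_n.+1 -> 'I_(fd_dim B)}) : k :=
  fd_mul (s (widen_ord (leqnSn _) i)) (s (lift ord0 i)) (t i) *
  ([forall j : 'I_n.+1, (j < i)%N ==> (t j == s (widen_ord (leqnSn _) j))] &&
   [forall j : 'I_n.+1, (i < j)%N ==> (t j == s (lift ord0 j))])%:R.

(* Last face d_{n+1}(a_0 (x) .. (x) a_{n+1}) = a_{n+1} a_0 (x) a_1 (x) .. (x) a_n. *)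
Definition last_face (k : fieldType) (B : fdalg k) (n : nat)
  (s : {ffun 'I_n.+2 -> 'I_(fd_dim B)}) (t : {ffun 'I_n.+1 -> 'I_(fd_dim B)}) : k :=
  fd_mul (s ord_max) (s ord0) (t ord0) *
  [forall j : 'I_n.+1, (0 < j)%N ==> (t j == s (widen_ord (leqnSn _) j))]%:R.

Definition hbd (k : fieldType) (B : fdalg k) (n : nat)
  (z : hchains B n.+1) : hchains B n :=
  fun t => \sum_(s : {ffun 'I_n.+2 -> 'I_(fd_dim B)})
    z s * (\sum_(i < n.+1) (-1) ^+ i * inner_face i s t
           + (-1) ^+ n.+1 * last_face s t).

Definition is_hcycle (k : fieldType) (B : fdalg k) (n : nat) : hchains B n -> Prop :=
  match n return hchains B n -> Prop with
  | 0 => fun _ => True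
  | m.+1 => fun z => forall t, hbd z t = 0
  end.

Definition HH_nonzero (k : fieldType) (B : fdalg k) (n : nat) : Prop :=
  exists z : hchains B n,
    is_hcycle z /\ ~ (exists w : hchains B n.+1, forall t, hbd w t = z t).

Definition HHdim_infinite (k : fieldType) (B : fdalg k) : Prop :=
  forall N : nat, exists2 n : nat, (N <= n)%N & HH_nonzero B n.

(* Main.v *)
Require Import Defs.
From HB Require Import structures.
From mathcomp Require Import all_boot all_order all_algebra.
From Stdlib Require Import FunctionalExtensionality Classical.
From mathcomp Require Import ring zify.
Set Implicit Arguments. Unset Strict Implicit. Unset Printing Implicit Defensive.
Import Order.TTheory GRing.Theory Num.Theory.
Local Open Scope ring_scope.

Section Gen.
Variable (k : fieldType) (m : nat) (mc : 'I_m -> 'I_m -> 'I_m -> k) (one : 'I_m -> k).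

Definition mulV (u v : 'I_m -> k) : 'I_m -> k :=
  fun z => \sum_x \sum_y u x * v y * mc x y z.

Hypothesis HA : forall i j p q : 'I_m,
  \sum_l mc i j l * mc l p q = \sum_l mc j p l * mc i l q.

Lemma mulVA u v w : mulV (mulV u v) w = mulV u (mulV v w).
Proof.
apply: functional_extensionality => z; rewrite /mulV.
transitivity (\sum_a \sum_b \sum_y u a * v b * w y * \sum_x (mc a b x * mc x y z)).
  under eq_bigr => x _ do under eq_bigr => y _ do rewrite !mulr_suml.
  under eq_bigr => x _ do under eq_bigr => y _ do under eq_bigr => a _ do rewrite !mulr_suml.
  rewrite exchange_big /=.
  under eq_bigr => j _ do rewrite exchange_big /=.
  under eq_bigr => j _ do under eq_bigr => a _ do rewrite exchange_big /=.
  rewrite exchange_big /=.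
  under eq_bigr => a _ do rewrite exchange_big /=.
  apply: eq_bigr => a _; apply: eq_bigr => b _; apply: eq_bigr => y _.
  rewrite mulr_sumr; apply: eq_bigr => x _; ring.
transitivity (\sum_a \sum_b \sum_y u a * v b * w y * \sum_x (mc b y x * mc a x z)).
  by do 3! (apply: eq_bigr => ? _); rewrite HA.
apply: eq_bigr => a _.
symmetry.
under eq_bigr => x _ do rewrite mulr_sumr mulr_suml.
under eq_bigr => x _ do under eq_bigr => i _ do rewrite mulr_sumr mulr_suml.
rewrite exchange_big /=; apply: eq_bigr => b _.
rewrite exchange_big /=; apply: eq_bigr => y _.
rewrite mulr_sumr; apply: eq_bigr => x _; ring.
Qed.

Definition delta (r : 'I_m) : 'I_m -> k := fun z => (r == z)%:R.

Lemma sum_deltar (F : 'I_m -> k) z : \sum_y F y * (y == z)%:R = F z.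
Proof.
rewrite (bigD1 z) //= eqxx mulr1 big1 ?addr0 // => y /negbTE ->; by rewrite mulr0.
Qed.
Lemma sum_deltal (F : 'I_m -> k) z : \sum_y (z == y)%:R * F y = F z.
Proof.
rewrite (bigD1 z) //= eqxx mul1r big1 ?addr0 // => y; rewrite eq_sym => /negbTE ->; by rewrite mul0r.
Qed.

Lemma vec_rep (v : 'I_m -> k) : v = fun x => \sum_r v r * delta r x.
Proof. by apply: functional_extensionality => x; rewrite /delta sum_deltar. Qed.

Lemma mulV_linr (a : 'I_m -> k) (c : 'I_m -> k) (f : 'I_m -> 'I_m -> k) z :
  mulV a (fun y => \sum_r c r * f r y) z = \sum_r c r * mulV a (f r) z.
Proof.
rewrite /mulV.
under eq_bigr => x _ do under eq_bigr => y _ do rewrite mulr_sumr !mulr_suml.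
under eq_bigr => x _ do rewrite exchange_big /=.
rewrite exchange_big /=; apply: eq_bigr => r _.
rewrite mulr_sumr; apply: eq_bigr => x _.
rewrite mulr_sumr; apply: eq_bigr => y _; ring.
Qed.

Lemma mulV_linl (b : 'I_m -> k) (c : 'I_m -> k) (f : 'I_m -> 'I_m -> k) z :
  mulV (fun x => \sum_r c r * f r x) b z = \sum_r c r * mulV (f r) b z.
Proof.
rewrite /mulV.
under eq_bigr => x _ do under eq_bigr => y _ do rewrite !mulr_suml.
under eq_bigr => x _ do rewrite exchange_big /=.
rewrite exchange_big /=; apply: eq_bigr => r _.
rewrite mulr_sumr; apply: eq_bigr => x _.
rewrite mulr_sumr; apply: eq_bigr => y _; ring.
Qed.

Hypothesis H1l : forall j p : 'I_m, \sum_l one l * mc l j p = (j == p)%:R.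
Hypothesis H1r : forall j p : 'I_m, \sum_l one l * mc j l p = (j == p)%:R.

Lemma mul1V v : mulV one v = v.
Proof.
apply: functional_extensionality => z; rewrite /mulV exchange_big /=.
rewrite -[RHS](sum_deltar v z); apply: eq_bigr => y _.
rewrite -H1l mulr_sumr; apply: eq_bigr => x _; ring.
Qed.

Lemma mulV1 v : mulV v one = v.
Proof.
apply: functional_extensionality => z; rewrite /mulV.
rewrite -[RHS](sum_deltar v z); apply: eq_bigr => x _.
rewrite -H1r mulr_sumr; apply: eq_bigr => y _; ring.
Qed.

Definition prodV (l : seq ('I_m -> k)) := foldr mulV one l.

Lemma prodV_cat l1 l2 : prodV (l1 ++ l2) = mulV (prodV l1) (prodV l2).
Proof.
elim: l1 => [|a l1 IH] /=; first by rewrite mul1V.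
by rewrite IH mulVA.
Qed.

Lemma prodV_merge l1 u v l2 :
  prodV (l1 ++ mulV u v :: l2) = prodV (l1 ++ u :: v :: l2).
Proof. elim: l1 => [|a l1 IH] /=; [by rewrite mulVA | by rewrite IH]. Qed.

Lemma slot_rep l1 v l2 z :
  prodV (l1 ++ v :: l2) z = \sum_r v r * prodV (l1 ++ delta r :: l2) z.
Proof.
elim: l1 z => [|a l1 IH] z /=.
  by rewrite {1}(vec_rep v) mulV_linl.
rewrite -mulV_linr; congr (mulV a _ z).
by apply: functional_extensionality => y; rewrite IH.
Qed.

Variable tc : 'I_m -> k.
Definition tau (v : 'I_m -> k) := \sum_z v z * tc z.

Lemma tau_slot l1 v l2 :
  tau (prodV (l1 ++ v :: l2)) = \sum_r v r * tau (prodV (l1 ++ delta r :: l2)).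
Proof.
rewrite /tau; under eq_bigr => z _ do rewrite slot_rep mulr_suml.
rewrite exchange_big /=; apply: eq_bigr => r _; rewrite mulr_sumr.
by apply: eq_bigr => z _; rewrite mulrA.
Qed.

Lemma tau_slot_lin (I : finType) l1 (c : I -> k) (f : I -> 'I_m -> k) l2 :
  tau (prodV (l1 ++ (fun z => \sum_x c x * f x z) :: l2)) =
  \sum_x c x * tau (prodV (l1 ++ f x :: l2)).
Proof.
rewrite tau_slot.
under eq_bigr => r _ do rewrite mulr_suml.
rewrite exchange_big /=; apply: eq_bigr => x _.
rewrite tau_slot mulr_sumr; apply: eq_bigr => r _; by rewrite mulrA.
Qed.

Lemma tau_slot_add l1 u v l2 :
  tau (prodV (l1 ++ (fun z => u z + v z) :: l2)) =
  tau (prodV (l1 ++ u :: l2)) + tau (prodV (l1 ++ v :: l2)).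
Proof.
rewrite !(tau_slot l1) -big_split /=; apply: eq_bigr => r _; by rewrite mulrDl.
Qed.

Hypothesis Htr : forall x y, \sum_z mc x y z * tc z = \sum_z mc y x z * tc z.

Lemma tau_comm u v : tau (mulV u v) = tau (mulV v u).
Proof.
rewrite /tau /mulV.
transitivity (\sum_x \sum_y u x * v y * \sum_z mc x y z * tc z).
  under eq_bigr => z _ do rewrite mulr_suml.
  rewrite exchange_big /=; apply: eq_bigr => x _.
  under eq_bigr => z _ do rewrite mulr_suml.
  rewrite exchange_big /=; apply: eq_bigr => y _.
  rewrite mulr_sumr; apply: eq_bigr => z _; ring.
symmetry.
under eq_bigr => z _ do rewrite mulr_suml.
rewrite exchange_big /=.
under eq_bigr => x _ do (under eq_bigr => z _ do rewrite mulr_suml; rewrite exchange_big /=).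
rewrite exchange_big /=; apply: eq_bigr => x _; apply: eq_bigr => y _.
rewrite Htr mulr_sumr; apply: eq_bigr => z _; ring.
Qed.

Lemma tau_rot w l : tau (prodV (w :: l)) = tau (prodV (rcons l w)).
Proof.
by rewrite -cats1 prodV_cat /= mulV1 tau_comm.
Qed.

Lemma exists_nonzero (f : 'I_m -> k) n :
  (forall l : seq 'I_m, size l = n -> \sum_z prodV (map delta l) z * f z = 0) ->
  \sum_z one z * f z = 0.
Proof.
elim: n f => [|n IH] f H; first by have := H [::] erefl.
have Hf : forall a, f a = 0.
  move=> a.
  have := IH (fun y => \sum_z mc a y z * f z).
  have mdelta : forall P z, mulV (delta a) P z = \sum_y P y * mc a y z.
    move=> P z; rewrite /mulV /delta.
    under eq_bigr => x _ do under eq_bigr => y _ do rewrite -mulrA.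
    under eq_bigr => x _ do rewrite -mulr_sumr.
    by rewrite sum_deltal.
  have key : forall P, \sum_y P y * (\sum_z mc a y z * f z) = \sum_z mulV (delta a) P z * f z.
    move=> P; under [RHS]eq_bigr => z _ do rewrite mdelta mulr_suml.
    rewrite exchange_big /=; apply: eq_bigr => y _; rewrite mulr_sumr.
    by apply: eq_bigr => z _; rewrite mulrA.
  rewrite key.
  have -> : \sum_z mulV (delta a) one z * f z = f a.
    rewrite -[RHS](sum_deltal f a); apply: eq_bigr => z _.
    rewrite mdelta; congr (_ * _); rewrite -H1r; apply: eq_bigr => y _; by [].
  apply => l Hl; rewrite key; apply: (H (a :: l)); by rewrite /= Hl.
by rewrite big1 // => z _; rewrite Hf mulr0.
Qed.

End Gen.

Section Gen2.
Variable (k : fieldType) (m : nat) (mc : 'I_m -> 'I_m -> 'I_m -> k).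
Lemma mulV_delta c e z : mulV mc (fun x => (c == x)%:R) (fun y => (e == y)%:R) z = mc c e z.
Proof.
rewrite /mulV -(sum_deltal (fun x => mc x e z) c); apply: eq_bigr => x _.
rewrite -(sum_deltal (fun y => mc x y z) e) mulr_sumr; apply: eq_bigr => y _; ring.
Qed.
Lemma mulV0l v z : mulV mc (fun _ => 0) v z = 0.
Proof. by rewrite /mulV big1 // => x _; rewrite big1 // => y _; rewrite !mul0r. Qed.
Lemma mulV0r v z : mulV mc v (fun _ => 0) z = 0.
Proof. by rewrite /mulV big1 // => x _; rewrite big1 // => y _; rewrite mulr0 !mul0r. Qed.
End Gen2.

Lemma splitL m n (j : 'I_m) : split (lshift n j) = inl j.
Proof. exact: (unsplitK (inl j)). Qed.
Lemma splitR m n (j : 'I_n) : split (rshift m j) = inr j.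
Proof. exact: (unsplitK (inr j)). Qed.
Lemma ordLR m n (y : 'I_(m + n)) :
  (exists a, y = lshift n a) \/ (exists a, y = rshift m a).
Proof. by case: (split_ordP y) => a ->; [left|right]; exists a. Qed.

Ltac S := rewrite /triv_ext_mul /triv_ext_one ?splitL ?splitR /= ?mul0r ?mulr0.
Ltac SS := rewrite ?big_split_ord /=;
  repeat (under eq_bigr => ? _ do S; let x := fresh "x" in set x := (bigop _ _ _));
  repeat match goal with x := _ |- _ => subst x end;
  rewrite ?big1_eq ?addr0 ?add0r.

Section Spec.
Variables (k : fieldType) (A : fdalg k).
Hypothesis HAx : fdalg_axioms A.
Local Notation d := (fd_dim A).

Lemma assocC (i j p q : 'I_(d + d)) :
  \sum_l @triv_ext_mul k A i j l * @triv_ext_mul k A l p q =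
  \sum_l @triv_ext_mul k A j p l * @triv_ext_mul k A i l q.
Proof.
case: HAx => _ HA H1l H1r.
case: (ordLR i) => [[a ->]|[a ->]]; case: (ordLR j) => [[b ->]|[b ->]];
case: (ordLR p) => [[c ->]|[c ->]]; case: (ordLR q) => [[e ->]|[e ->]]; SS.
all: try done.
all: try by rewrite HA.
all: try by rewrite -HA; apply: eq_bigr => ? _; apply: mulrC.
all: try by (under eq_bigr do rewrite mulrC); rewrite HA; apply: eq_bigr => ? _; apply: mulrC.
all: try by (under [RHS]eq_bigr do rewrite mulrC); rewrite -HA; apply: eq_bigr => ? _; apply: mulrC.
all: try by (under eq_bigr do rewrite mulrC); rewrite -HA; apply: eq_bigr => ? _; apply: mulrC.
all: try by (under eq_bigr do rewrite mulrC); rewrite HA.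
Qed.

Lemma unitLC (j p : 'I_(d + d)) :
  \sum_l @triv_ext_one k A l * @triv_ext_mul k A l j p = (j == p)%:R.
Proof.
case: HAx => _ HA H1l H1r.
case: (ordLR j) => [[b ->]|[b ->]]; case: (ordLR p) => [[c ->]|[c ->]]; SS;
  rewrite ?eq_shift //.
all: try by rewrite H1l.
all: try by rewrite H1r eq_sym.
Qed.

Lemma unitRC (j p : 'I_(d + d)) :
  \sum_l @triv_ext_one k A l * @triv_ext_mul k A j l p = (j == p)%:R.
Proof.
case: HAx => _ HA H1l H1r.
case: (ordLR j) => [[b ->]|[b ->]]; case: (ordLR p) => [[c ->]|[c ->]]; SS;
  rewrite ?eq_shift //.
all: try by rewrite H1r.
all: try by rewrite H1l eq_sym.
all: try by rewrite H1r eq_sym.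
all: try by rewrite H1l.
Qed.

Definition tcA (z : 'I_(d + d)) : k :=
  match split z with inl _ => 0 | inr i => fd_one i end.

Lemma L1 (b c : 'I_d) :
  \sum_(i < d) fd_mul i b c * fd_one i = \sum_(i < d) fd_mul b i c * fd_one i.
Proof.
case: HAx => _ HA H1l H1r.
rewrite (eq_bigr (fun i => fd_one i * fd_mul i b c)); last by move=> i _; apply: mulrC.
rewrite H1l -H1r; apply: eq_bigr => i _; apply: mulrC.
Qed.
Lemma L2 (b c : 'I_d) :
  \sum_(i < d) fd_mul c i b * fd_one i = \sum_(i < d) fd_mul i c b * fd_one i.
Proof.
case: HAx => _ HA H1l H1r.
rewrite (eq_bigr (fun i => fd_one i * fd_mul c i b)); last by move=> i _; apply: mulrC.
rewrite H1r -H1l; apply: eq_bigr => i _; apply: mulrC.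
Qed.

Lemma trC (x y : 'I_(d + d)) :
  \sum_z @triv_ext_mul k A x y z * tcA z = \sum_z @triv_ext_mul k A y x z * tcA z.
Proof.
case: HAx => _ HA H1l H1r.
rewrite /tcA.
case: (ordLR x) => [[b ->]|[b ->]]; case: (ordLR y) => [[c ->]|[c ->]]; SS => //.
all: try exact: L1.
all: try exact: L2.
Qed.

End Spec.

Section TM.
Variables (k : fieldType) (B : fdalg k).
Local Notation m := (fd_dim B).
Local Notation tm := (@triv_ext_mul k B).
Lemma tmLLL a b c : tm (lshift m a) (lshift m b) (lshift m c) = fd_mul a b c.
Proof. by rewrite /triv_ext_mul !splitL. Qed.
Lemma tmLLR a b c : tm (lshift m a) (lshift m b) (rshift m c) = 0.
Proof. by rewrite /triv_ext_mul !splitL splitR. Qed.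
Lemma tmLRL a b c : tm (lshift m a) (rshift m b) (lshift m c) = 0.
Proof. by rewrite /triv_ext_mul !splitL splitR. Qed.
Lemma tmLRR a b c : tm (lshift m a) (rshift m b) (rshift m c) = fd_mul c a b.
Proof. by rewrite /triv_ext_mul !splitL !splitR. Qed.
Lemma tmRLL a b c : tm (rshift m a) (lshift m b) (lshift m c) = 0.
Proof. by rewrite /triv_ext_mul !splitL splitR. Qed.
Lemma tmRLR a b c : tm (rshift m a) (lshift m b) (rshift m c) = fd_mul b c a.
Proof. by rewrite /triv_ext_mul !splitL !splitR. Qed.
Lemma tmRRL a b c : tm (rshift m a) (rshift m b) (lshift m c) = 0.
Proof. by rewrite /triv_ext_mul !splitL !splitR. Qed.
Lemma tmRRR a b c : tm (rshift m a) (rshift m b) (rshift m c) = 0.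
Proof. by rewrite /triv_ext_mul !splitR. Qed.
Lemma tmRR a b x : tm (rshift m a) (rshift m b) x = 0.
Proof. by rewrite /triv_ext_mul !splitR. Qed.
End TM.

Section Sym.
Variables (k : fieldType) (A : fdalg k).
Local Notation d := (fd_dim A).
Local Notation mC := (@triv_ext_mul k A).

Definition swapC (y : 'I_(d + d)) : 'I_(d + d) :=
  match split y with inl a => rshift d a | inr a => lshift d a end.

Lemma swapCK y : swapC (swapC y) = y.
Proof.
by case: (ordLR y) => [[a ->]|[a ->]]; rewrite /swapC ?splitL ?splitR ?splitL ?splitR.
Qed.

Lemma swapC_eq y z : (swapC y == z) = (y == swapC z).
Proof.
apply/eqP/eqP => [<-|->]; by rewrite swapCK.
Qed.

Lemma sym1 z c y : mC (swapC z) c y = mC c (swapC y) z.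
Proof.
rewrite /swapC.
case: (ordLR z) => [[a ->]|[a ->]]; case: (ordLR c) => [[b ->]|[b ->]];
case: (ordLR y) => [[e ->]|[e ->]]; rewrite ?splitL ?splitR;
rewrite ?tmLLL ?tmLLR ?tmLRL ?tmLRR ?tmRLL ?tmRLR ?tmRRL ?tmRRR //.
Qed.

Lemma sym2 z c y : mC c (swapC z) y = mC (swapC y) c z.
Proof.
rewrite /swapC.
case: (ordLR z) => [[a ->]|[a ->]]; case: (ordLR c) => [[b ->]|[b ->]];
case: (ordLR y) => [[e ->]|[e ->]]; rewrite ?splitL ?splitR;
rewrite ?tmLLL ?tmLLR ?tmLRL ?tmLRR ?tmRLL ?tmRLR ?tmRRL ?tmRRR //.
Qed.
End Sym.

Section Rho.
Variables (k : fieldType) (A : fdalg k).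
Local Notation d := (fd_dim A).
Local Notation mC := (@triv_ext_mul k A).
Local Notation X := ('I_((d + d) + (d + d))).

Definition rhoB (x : X) : 'I_(d + d) -> k :=
  fun z => match split x with inl _ => 0 | inr y => (swapC y == z)%:R end.
Definition iotaB (x : X) : 'I_(d + d) -> k :=
  fun z => match split x with inl y => (y == z)%:R | inr _ => 0 end.

Lemma rhoL c : rhoB (lshift (d + d) c) = fun _ => 0.
Proof. by rewrite /rhoB splitL. Qed.
Lemma rhoR c : rhoB (rshift (d + d) c) = fun z => (swapC c == z)%:R.
Proof. by rewrite /rhoB splitR. Qed.
Lemma iotaL c : iotaB (lshift (d + d) c) = fun z => (c == z)%:R.
Proof. by rewrite /iotaB splitL. Qed.
Lemma iotaR c : iotaB (rshift (d + d) c) = fun _ => 0.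
Proof. by rewrite /iotaB splitR. Qed.

Ltac S2 := rewrite ?tmLLL ?tmLLR ?tmLRL ?tmLRR ?tmRLL ?tmRLR ?tmRRL ?tmRRR
  ?rhoL ?rhoR ?iotaL ?iotaR /= ?mul0r ?mulr0.

Lemma rho_mul (a b : X) z :
  \sum_x @triv_ext_mul k (triv_ext A) a b x * rhoB x z =
  mulV mC (iotaB a) (rhoB b) z + mulV mC (rhoB a) (iotaB b) z.
Proof.
rewrite big_split_ord /=.
case: (ordLR a) => [[c ->]|[c ->]]; case: (ordLR b) => [[e ->]|[e ->]];
  rewrite ?rhoL ?rhoR ?iotaL ?iotaR ?mulV0l ?mulV0r ?mulV_delta;
  repeat (under eq_bigr => ? _ do S2; let x := fresh "x" in set x := (bigop _ _ _));
  repeat match goal with x := _ |- _ => subst x end;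
  rewrite ?big1_eq ?addr0 ?add0r //.
  by under eq_bigr do rewrite swapC_eq; rewrite sum_deltar sym1.
by under eq_bigr do rewrite swapC_eq; rewrite sum_deltar sym2.
Qed.
End Rho.

Section Face.
Variables (k : fieldType) (B : fdalg k).
Local Notation X := ('I_(fd_dim B)).

Lemma sum_pick (T : finType) (F : T -> k) (a : T) :
  \sum_t (t == a)%:R * F t = F a.
Proof.
rewrite (bigD1 a) //= eqxx mul1r big1 ?addr0 // => y /negbTE ->; by rewrite mul0r.
Qed.

Lemma sum_fix (I T : finType) (F : T -> k) (M : I -> T) (pi : T -> I)
  (HM : forall x, pi (M x) = x) :
  \sum_t F t * (t == M (pi t))%:R = \sum_x F (M x).
Proof.
transitivity (\sum_t \sum_x (t == M x)%:R * F t).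
  apply: eq_bigr => t _.
  rewrite mulrC -(sum_pick (fun x => (t == M x)%:R * F t) (pi t)).
  apply: eq_bigr => x _.
  case: (eqVneq x (pi t)) => [->|nx]; first by rewrite mul1r.
  case: (eqVneq t (M x)) => [et|]; last by rewrite !mul0r ?mulr0.
  by case/eqP: nx; rewrite et HM.
rewrite exchange_big /=; apply: eq_bigr => x _; exact: sum_pick.
Qed.

Definition mI n (i : 'I_n.+1) (s : {ffun 'I_n.+2 -> X}) (x : X) : {ffun 'I_n.+1 -> X} :=
  [ffun j : 'I_n.+1 => if (j < i)%N then s (widen_ord (leqnSn _) j)
                   else if j == i then x else s (lift ord0 j)].

Definition mL n (s : {ffun 'I_n.+2 -> X}) (x : X) : {ffun 'I_n.+1 -> X} :=
  [ffun j : 'I_n.+1 => if j == ord0 then x else s (widen_ord (leqnSn _) j)].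

Lemma inner_faceE n (i : 'I_n.+1) s t :
  inner_face i s t = fd_mul (s (widen_ord (leqnSn _) i)) (s (lift ord0 i)) (t i) *
    (t == mI i s (t i))%:R.
Proof.
rewrite /inner_face; congr (_ * _%:R); congr nat_of_bool.
apply/idP/idP.
  case/andP => /forallP H1 /forallP H2; apply/eqP/ffunP => j; rewrite ffunE.
  case: (ltngtP j i) => [lt|gt|/val_inj ->].
  - by apply/eqP; exact: (implyP (H1 j) lt).
  - have /negbTE-> : j != i by rewrite -val_eqE /= neq_ltn gt orbT.
    by apply/eqP; exact: (implyP (H2 j) gt).
  - by rewrite eqxx.
move/eqP=> ->; apply/andP; split; apply/forallP => j; apply/implyP => H; rewrite ffunE.
  by rewrite H.
rewrite ltnNge (ltnW H) /=; case: (eqVneq j i) => [ej|//].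
by move: H; rewrite ej ltnn.
Qed.

Lemma last_faceE n s t :
  last_face (n := n) s t = fd_mul (s ord_max) (s ord0) (t ord0) *
    (t == mL s (t ord0))%:R.
Proof.
rewrite /last_face; congr (_ * _%:R); congr nat_of_bool.
apply/idP/idP.
  move/forallP => H1; apply/eqP/ffunP => j; rewrite ffunE.
  case: eqP => [->//|nj]; apply/eqP; apply: (implyP (H1 j)).
  by rewrite lt0n; apply/eqP => H; apply: nj; exact: val_inj.
move/eqP=> ->; apply/forallP => j; apply/implyP => H; rewrite ffunE.
by case: (eqVneq j ord0) => [ej|//]; move: H; rewrite ej.
Qed.

Lemma inner_sum n (i : 'I_n.+1) s (G : {ffun 'I_n.+1 -> X} -> k) :
  \sum_t G t * inner_face i s t =
  \sum_x fd_mul (s (widen_ord (leqnSn _) i)) (s (lift ord0 i)) x * G (mI i s x).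
Proof.
under eq_bigr => t _ do rewrite inner_faceE mulrA.
rewrite (@sum_fix _ _ (fun t => G t * fd_mul (s (widen_ord (leqnSn _) i)) (s (lift ord0 i)) (t i))
                 (mI i s) (fun t => t i)); last by move=> x; rewrite ffunE ltnn eqxx.
by apply: eq_bigr => x _; rewrite ffunE ltnn eqxx mulrC.
Qed.

Lemma last_sum n s (G : {ffun 'I_n.+1 -> X} -> k) :
  \sum_t G t * last_face s t =
  \sum_x fd_mul (s ord_max) (s ord0) x * G (mL s x).
Proof.
under eq_bigr => t _ do rewrite last_faceE mulrA.
rewrite (@sum_fix _ _ (fun t => G t * fd_mul (s ord_max) (s ord0) (t ord0))
                 (mL s) (fun t => t ord0)); last by move=> x; rewrite ffunE eqxx.
by apply: eq_bigr => x _; rewrite ffunE eqxx mulrC.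
Qed.


Lemma widen_inord n j : (j < n.+1)%N ->
  widen_ord (leqnSn n.+1) (inord j : 'I_n.+1) = inord j :> 'I_n.+2.
Proof. by move=> H; apply: val_inj; rewrite /= !inordK //; lia. Qed.

Lemma lift_inord n j : (j < n.+1)%N ->
  lift ord0 (inord j : 'I_n.+1) = inord j.+1 :> 'I_n.+2.
Proof. by move=> H; apply: val_inj; rewrite /= /bump /= !inordK //; lia. Qed.

Section Lists.
Variables (T : Type) (g : X -> T).

Lemma size_cons1 (a : T) l : size (a :: l) = (size l).+1.
Proof. by []. Qed.
Lemma nth_consS (x0 a : T) l r : nth x0 (a :: l) r.+1 = nth x0 l r.
Proof. by []. Qed.
Lemma nth_cons0 (x0 a : T) l : nth x0 (a :: l) 0 = a.
Proof. by []. Qed.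

Lemma list_mI n (i : 'I_n.+1) s x :
  mkseq (fun j => g (mI i s x (inord j))) n.+1 =
  take i (mkseq (fun j => g (s (inord j))) n.+2) ++ g x ::
  drop i.+2 (mkseq (fun j => g (s (inord j))) n.+2).
Proof.
have Hi := ltn_ord i.
apply: (@eq_from_nth _ (g x)).
  rewrite size_cat size_cons1 size_take size_drop !size_mkseq.
  have -> : (i < n.+2)%N by lia.
  lia.
move=> j; rewrite size_mkseq => Hj.
rewrite nth_mkseq // ffunE inordK // nth_cat size_take size_mkseq.
have -> : (i < n.+2)%N by lia.
case: (ltngtP j i) => [lt|gt|eq].
- rewrite nth_take // widen_inord // nth_mkseq //; lia.
- have -> : (inord j == i) = false.
    by apply/negbTE; rewrite -val_eqE /= inordK // neq_ltn gt orbT.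
  have -> : (j - i = (j - i.+1).+1)%N by lia.
  rewrite nth_consS nth_drop nth_mkseq ?lift_inord //; last by lia.
  by congr (g (s _)); apply: val_inj; rewrite /= !inordK //; lia.
- have -> : (inord j == i) by rewrite -val_eqE /= inordK // eq.
  by rewrite eq subnn nth_cons0.
Qed.

Lemma list_mL n (s : {ffun 'I_n.+2 -> X}) x :
  mkseq (fun j => g (mL s x (inord j))) n.+1 =
  g x :: drop 1 (take n.+1 (mkseq (fun j => g (s (inord j))) n.+2)).
Proof.
apply: (@eq_from_nth _ (g x)).
  by rewrite size_cons1 size_drop size_take !size_mkseq ltnSn; lia.
move=> j; rewrite size_mkseq => Hj.
rewrite nth_mkseq // ffunE.
case: j Hj => [|j] Hj.
  by have -> : (inord 0 == ord0 :> 'I_n.+1) by rewrite -val_eqE /= inordK.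
have -> : (inord j.+1 == ord0 :> 'I_n.+1) = false.
  by rewrite -val_eqE /= inordK.
rewrite nth_consS nth_drop nth_take; last by lia.
rewrite nth_mkseq; last by lia.
by congr (g (s _)); apply: val_inj; rewrite /= !inordK //; lia.
Qed.

Variable h : X -> T.
Lemma list_Q n (s : {ffun 'I_n.+2 -> X}) j : (j < n.+2)%N ->
  take j (mkseq (fun r => g (s (inord r))) n.+2) ++ h (s (inord j)) ::
  drop j.+1 (mkseq (fun r => g (s (inord r))) n.+2) =
  mkseq (fun r => if r == j then h (s (inord r)) else g (s (inord r))) n.+2.
Proof.
move=> Hj; apply: (@eq_from_nth _ (h (s (inord j)))).
  by rewrite size_cat size_cons1 size_take size_drop !size_mkseq Hj; lia.
move=> r; rewrite size_cat size_cons1 size_take size_drop !size_mkseq Hj => Hr.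
rewrite nth_mkseq; last by lia.
rewrite nth_cat size_take size_mkseq Hj.
case: (ltngtP r j) => [lt|gt|->].
- by rewrite nth_take // nth_mkseq //; lia.
- have -> : (r - j = (r - j.+1).+1)%N by lia.
  rewrite nth_consS nth_drop nth_mkseq; last by lia.
  by have -> : (j.+1 + (r - j.+1) = r)%N by lia.
- by rewrite subnn nth_cons0.
Qed.
End Lists.

End Face.

Section Main.
Variables (k : fieldType) (A : fdalg k).
Hypothesis HAx : fdalg_axioms A.
Local Notation d := (fd_dim A).
Local Notation BB := (triv_ext (triv_ext A)).
Local Notation X := 'I_(fd_dim BB).
Local Notation mC := (@triv_ext_mul k A).
Local Notation oneC := (@triv_ext_one k A).
Local Notation prodC := (prodV mC oneC).
Local Notation tauC := (tau (@tcA k A)).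
Local Notation rho := (@rhoB k A).
Local Notation iota := (@iotaB k A).

Definition phi n (t : {ffun 'I_n.+1 -> X}) : k :=
  tauC (prodC (mkseq (fun j => rho (t (inord j))) n.+1)).

Definition Q n (s : {ffun 'I_n.+2 -> X}) (j : nat) : k :=
  tauC (prodC (mkseq (fun r => if r == j then iota (s (inord r)) else rho (s (inord r))) n.+2)).

Lemma widen_ordE n (i : 'I_n.+1) : widen_ord (leqnSn n.+1) i = inord i.
Proof. by apply: val_inj; rewrite /= inordK //; apply: ltnW; rewrite ltnS. Qed.
Lemma lift_ordE n (i : 'I_n.+1) : lift ord0 i = inord i.+1 :> 'I_n.+2.
Proof. by apply: val_inj; rewrite /= inordK // ltnS. Qed.

Lemma slot_rho l1 l2 (a b : X) :
  \sum_x fd_mul (f := BB) a b x * tauC (prodC (l1 ++ rho x :: l2)) =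
  tauC (prodC (l1 ++ iota a :: rho b :: l2)) + tauC (prodC (l1 ++ rho a :: iota b :: l2)).
Proof.
rewrite -tau_slot_lin.
have -> : (fun z => \sum_x fd_mul (f := BB) a b x * rho x z) =
          (fun z => mulV mC (iota a) (rho b) z + mulV mC (rho a) (iota b) z).
  by apply: functional_extensionality => z; rewrite -rho_mul.
rewrite tau_slot_add.
by rewrite -!(prodV_merge _ (assocC HAx)).
Qed.

Lemma face_val n (i : 'I_n.+1) (s : {ffun 'I_n.+2 -> X}) :
  \sum_t phi t * inner_face i s t = Q s i + Q s i.+1.
Proof.
rewrite inner_sum /phi.
under eq_bigr => x _ do rewrite list_mI.
rewrite slot_rho widen_ordE lift_ordE.
set L := mkseq _ n.+2.
have Hi := ltn_ord i.
have HL : size L = n.+2 by rewrite size_mkseq.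
congr (_ + _).
  rewrite -[rho (s (inord i.+1)) :: _](_ : drop i.+1 L = _); last first.
    by rewrite (drop_nth (rho (s (inord 0)))) ?HL // nth_mkseq.
  by rewrite /Q -list_Q //; lia.
rewrite -cat_rcons -[rcons _ _](_ : take i.+1 L = _); last first.
  by rewrite (take_nth (rho (s (inord 0)))) ?HL ?nth_mkseq //; lia.
by rewrite /Q -list_Q.
Qed.

Lemma last_val n (s : {ffun 'I_n.+2 -> X}) :
  \sum_t phi t * last_face s t = Q s n.+1 + Q s 0.
Proof.
rewrite last_sum /phi.
under eq_bigr => x _ do rewrite list_mL.
rewrite (slot_rho [::]) !cat0s.
rewrite (tau_rot (assocC HAx) (unitLC HAx) (unitRC HAx) (trC HAx) (iota (s ord_max))).
rewrite (tau_rot (assocC HAx) (unitLC HAx) (unitRC HAx) (trC HAx) (rho (s ord_max))).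
have -> : ord_max = inord n.+1 :> 'I_n.+2 by apply: val_inj; rewrite /= inordK.
have -> : ord0 = inord 0 :> 'I_n.+2 by apply: val_inj; rewrite /= inordK.
set L := mkseq _ n.+2.
have HL : size L = n.+2 by rewrite size_mkseq.
have Ht : take n.+1 L = rho (s (inord 0)) :: drop 1 (take n.+1 L).
  rewrite -[in LHS](drop0 (take n.+1 L)) (drop_nth (rho (s (inord 0)))).
    by rewrite nth_take // nth_mkseq.
  by rewrite size_take HL ltnSn.
have HL1 : rcons (take n.+1 L) (rho (s (inord n.+1))) = L.
  rewrite -(nth_mkseq (rho (s (inord 0))) (fun j => rho (s (inord j))) (ltnSn n.+1)).
  by rewrite -take_nth ?HL // -HL take_size.
congr (_ + _).
  rewrite -Ht -cats1.
  have -> : [:: iota (s (inord n.+1))] = iota (s (inord n.+1)) :: drop n.+2 L.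
    by rewrite drop_oversize ?HL.
  by rewrite /Q -list_Q.
rewrite rcons_cons -drop_rcons; last by rewrite size_take HL ltnSn.
rewrite HL1 /Q -list_Q // take0.
Qed.

Lemma telesc (Qf : nat -> k) n :
  \sum_(i < n.+1) (-1) ^+ i * (Qf i + Qf i.+1) = Qf 0 + (-1) ^+ n * Qf n.+1.
Proof.
elim: n => [|n IH]; first by rewrite big_ord1 expr0 !mul1r.
rewrite big_ord_recr /= IH !exprS; ring.
Qed.

Lemma cocycle n (s : {ffun 'I_n.+2 -> X}) : ~~ odd n ->
  \sum_t phi t * (\sum_(i < n.+1) (-1) ^+ i * inner_face i s t
                  + (-1) ^+ n.+1 * last_face s t) = 0.
Proof.
move=> Hn.
under eq_bigr => t _ do rewrite mulrDr mulr_sumr.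
rewrite big_split /= exchange_big /=.
under eq_bigr => i _ do (under eq_bigr => t _ do rewrite mulrCA; rewrite -mulr_sumr face_val).
under [X in _ + X]eq_bigr => t _ do rewrite mulrCA.
rewrite -mulr_sumr last_val.
rewrite (telesc (Q s)) exprS -signr_odd (negbTE Hn) expr0; ring.
Qed.

Lemma mdelta c P w : mulV mC (@delta k (d + d) c) P w = \sum_y P y * mC c y w.
Proof.
rewrite /mulV /delta.
under eq_bigr => x _ do under eq_bigr => y _ do rewrite -mulrA.
under eq_bigr => x _ do rewrite -mulr_sumr.
by rewrite sum_deltal.
Qed.

Lemma exists_phi n :
  exists t : {ffun 'I_n.+1 -> X}, phi t != 0 /\ (forall j, exists y, t j = rshift (d + d) y).
Proof.
case: HAx => Hd HA H1l H1r.
have [i0 Hi0] : exists i : 'I_d, @fd_one k A i != 0.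
  case: (boolP [exists i : 'I_d, @fd_one k A i != 0]) => [/existsP//|/existsPn H].
  have := H1l (Ordinal Hd) (Ordinal Hd); rewrite eqxx big1 => [/eqP|l _].
    by rewrite eq_sym oner_eq0.
  by move: (H l); rewrite negbK => /eqP ->; rewrite mul0r.
pose c0 : 'I_(d + d) := rshift d i0.
have tc0 : tcA c0 = fd_one i0 by rewrite /tcA splitR.
pose f (y : 'I_(d + d)) := \sum_w mC c0 y w * tcA w.
have key : forall P, \sum_z P z * f z = tauC (mulV mC (@delta k (d + d) c0) P).
  move=> P; rewrite /tau /f.
  under eq_bigr => z _ do rewrite mulr_sumr.
  rewrite exchange_big /=; apply: eq_bigr => w _.
  rewrite mdelta mulr_suml; apply: eq_bigr => z _; by rewrite mulrA.
have : ~ (forall l, size l = n -> \sum_z prodC (map (@delta k (d + d)) l) z * f z = 0).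
  move=> H; have := exists_nonzero (unitRC HAx) H.
  have -> : \sum_z oneC z * f z = tcA c0.
    rewrite /f; under eq_bigr => z _ do rewrite mulr_sumr.
    rewrite exchange_big /= -[RHS](sum_deltal (@tcA k A) c0).
    apply: eq_bigr => w _; rewrite -(unitRC HAx) mulr_suml.
    by apply: eq_bigr => z _; rewrite mulrA.
  by rewrite tc0 => /eqP; rewrite (negbTE Hi0).
move=> Hnot; have [l Hl'] := not_all_ex_not _ _ Hnot.
have [Hl Hnz] := imply_to_and _ _ Hl'.
exists [ffun j : 'I_n.+1 => rshift (d + d) (swapC (nth c0 (c0 :: l) j))].
split; last by move=> j; rewrite ffunE; eexists.
rewrite /phi.
set t := [ffun _ => _].
have -> : mkseq (fun j => rho (t (inord j))) n.+1 = map (@delta k (d + d)) (c0 :: l).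
  apply: (@eq_from_nth _ (@delta k (d + d) c0)); first by rewrite size_mkseq size_map /= Hl.
  move=> j; rewrite size_mkseq => Hj.
  rewrite nth_mkseq // ffunE rhoR swapCK inordK // (nth_map c0) //= Hl //.
move: Hnz; rewrite key => Hnz; apply/eqP; exact: Hnz.
Qed.

End Main.

Theorem corollary3p6 (k : closedFieldType) (A : fdalg k) :
  fdalg_axioms A -> HHdim_infinite (triv_ext (triv_ext A)).
Proof.
move=> HAx N.
exists N.*2.+2; first by rewrite -addnn; lia.
have [ts [Hnz Hr]] := exists_phi HAx N.*2.+2.
have H0 : forall a b x, fd_mul (f := triv_ext (triv_ext A)) (ts a) (ts b) x = 0.
  move=> a b x; case: (Hr a) => y ->; case: (Hr b) => y' ->; exact: tmRR.
exists (fun t => (t == ts)%:R); split.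
  move=> t; rewrite /hbd sum_pick big1 ?add0r => [|i _].
    by rewrite /last_face H0 !mul0r mulr0.
  by rewrite /inner_face H0 !mul0r mulr0.
case=> w Hw.
have E1 : \sum_t phi t * (t == ts)%:R = phi ts.
  by under eq_bigr do rewrite mulrC; rewrite sum_pick.
have E2 : \sum_t phi t * (t == ts)%:R = 0.
  under eq_bigr => t _ do rewrite -Hw /hbd mulr_sumr.
  rewrite exchange_big /= big1 // => s _.
  under eq_bigr => t _ do rewrite mulrCA.
  rewrite -mulr_sumr (cocycle HAx) ?mulr0 //.
  by rewrite /= negbK odd_double.
by move: Hnz; rewrite -E1 E2 eqxx.
Qed.
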